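(* For every odd integer $k\ge 3$, the graph $F_k$ is geodetic.
   Context: All graphs are finite, simple and undirected; a graph is geodetic if between any two vertices there is at most one shortest path. For odd $k\ge 3$, $F_k$ is constructed as follows: take two disjoint cycles of length $k$ with vertices $u_1,\dots,u_k$ and $v_1,\dots,v_k$ respectively (in cyclic order), and add: a vertex $b$ adjacent to $u_{(k+1)/2}$ and $v_{(k+1)/2}$; a vertex $s_1$ adjacent to $u_1$ and a vertex $s_2$ adjacent to $u_k$; a vertex $t_1$ adjacent to $v_1$ and a vertex $t_2$ adjacent to $v_k$; and four paths of length three (each with two new internal vertices) joining $s_1$ to $t_1$, $s_1$ to $t_2$, $s_2$ to $t_1$, and $s_2$ to $t_2$. *)

(* Defs.v *)
From mathcomp Require Import all_boot.
Set Implicit Arguments. Unset Strict Implicit. Unset Printing Implicit Defensive.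

(* A walk from [x] is a sequence [p] of the subsequent vertices, with
   [path e x p]; it ends at [last x p] and has length [size p].
   A shortest path from x to y is a walk from x to y whose length is minimal
   among all walks from x to y (such a walk automatically repeats no vertex). *)
Definition is_walk (T : finType) (e : rel T) (x y : T) (p : seq T) : bool :=
  path e x p && (last x p == y).

Definition is_shortest_path (T : finType) (e : rel T) (x y : T) (p : seq T) :=
  is_walk e x y p /\ forall q, is_walk e x y q -> size p <= size q.

Definition geodetic (T : finType) (e : rel T) : Prop :=
  forall x y : T, forall p q : seq T,
    is_shortest_path e x y p -> is_shortest_path e x y q -> p = q.

(* Vertex set {0, ..., 2k+12}, encoded as follows:
   u_{i+1} = i           (0 <= i < k)
   v_{i+1} = k + i       (0 <= i < k)
   b = 2k, s1 = 2k+1, s2 = 2k+2, t1 = 2k+3, t2 = 2k+4,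
   internal path vertices w_j = 2k+5+j (0 <= j < 8):
     s1 - w0 - w1 - t1,  s1 - w2 - w3 - t2,
     s2 - w4 - w5 - t1,  s2 - w6 - w7 - t2. *)
Section Fk.
Variable k : nat.
Definition Fu (i : nat) : nat := i.
Definition Fv (i : nat) : nat := k + i.
Definition Fb : nat := 2 * k.
Definition Fs1 : nat := 2 * k + 1.
Definition Fs2 : nat := 2 * k + 2.
Definition Ft1 : nat := 2 * k + 3.
Definition Ft2 : nat := 2 * k + 4.
Definition Fw (j : nat) : nat := 2 * k + 5 + j.

(* index (0-based) of u_{(k+1)/2} / v_{(k+1)/2} *)
Definition Fmid : nat := ((k + 1) %/ 2).-1.

Definition Fdedge (a c : nat) : bool :=
  [|| (a < k) && (c == Fu (a.+1 %% k)),
      (k <= a < 2 * k) && (c == Fv ((a - k).+1 %% k)),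
      (a == Fb) && (c == Fu Fmid),
      (a == Fb) && (c == Fv Fmid),
      (a == Fs1) && (c == Fu 0),
      (a == Fs2) && (c == Fu k.-1),
      (a == Ft1) && (c == Fv 0),
      (a == Ft2) && (c == Fv k.-1),
      (a == Fs1) && (c == Fw 0), (a == Fw 0) && (c == Fw 1), (a == Fw 1) && (c == Ft1),
      (a == Fs1) && (c == Fw 2), (a == Fw 2) && (c == Fw 3), (a == Fw 3) && (c == Ft2),
      (a == Fs2) && (c == Fw 4), (a == Fw 4) && (c == Fw 5), (a == Fw 5) && (c == Ft1)
    |
      [|| (a == Fs2) && (c == Fw 6), (a == Fw 6) && (c == Fw 7) | (a == Fw 7) && (c == Ft2)]].

Definition Fk_vertex : finType := 'I_(2 * k + 13).

Definition Fk_adj : rel Fk_vertex :=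
  fun x y => Fdedge (val x) (val y) || Fdedge (val y) (val x).
End Fk.
Arguments Fk_adj : clear implicits.
Arguments Fdedge : clear implicits.

(* Main.v *)
Require Import Defs.
From mathcomp Require Import all_boot.
From mathcomp Require Import zify.
From Stdlib Require Import ZArith.
Set Implicit Arguments. Unset Strict Implicit. Unset Printing Implicit Defensive.

Inductive V := UM | UL of nat | UR of nat | VM | VL of nat | VR of nat | BB | S1 | S2 | T1 | T2 | W0 | W1 | W2 | W3 | W4 | W5 | W6 | W7.
Definition D (m : nat) (x y : V) : nat :=
  match x, y with
  | UM, UM => (0)
  | UM, UL u => (u)
  | UM, UR u => (u)
  | UM, VM => (2)
  | UM, VL u => (u + 2)
  | UM, VR u => (u + 2)
  | UM, BB => (1)
  | UM, S1 => (m + 1)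
  | UM, S2 => (m + 1)
  | UM, T1 => (m + 3)
  | UM, T2 => (m + 3)
  | UM, W0 => (m + 2)
  | UM, W1 => (m + 3)
  | UM, W2 => (m + 2)
  | UM, W3 => (m + 3)
  | UM, W4 => (m + 2)
  | UM, W5 => (m + 3)
  | UM, W6 => (m + 2)
  | UM, W7 => (m + 3)
  | UL t, UM => (t)
  | UL t, UL u => (t - u) + (u - t)
  | UL t, UR u => minn ((t + u)) ((2 * m + 1) - (t + u))
  | UL t, VM => (t + 2)
  | UL t, VL u => minn ((2 * m + 5) - (t + u)) ((t + u + 2))
  | UL t, VR u => minn ((2 * m + 5) - (t + u)) ((t + u + 2))
  | UL t, BB => (t + 1)
  | UL t, S1 => (m + 1) - (t)
  | UL t, S2 => (m + 2) - (t)
  | UL t, T1 => (m + 4) - (t)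
  | UL t, T2 => (m + 4) - (t)
  | UL t, W0 => (m + 2) - (t)
  | UL t, W1 => (m + 3) - (t)
  | UL t, W2 => (m + 2) - (t)
  | UL t, W3 => (m + 3) - (t)
  | UL t, W4 => (m + 3) - (t)
  | UL t, W5 => (m + 4) - (t)
  | UL t, W6 => (m + 3) - (t)
  | UL t, W7 => (m + 4) - (t)
  | UR t, UM => (t)
  | UR t, UL u => minn ((t + u)) ((2 * m + 1) - (t + u))
  | UR t, UR u => (t - u) + (u - t)
  | UR t, VM => (t + 2)
  | UR t, VL u => minn ((2 * m + 5) - (t + u)) ((t + u + 2))
  | UR t, VR u => minn ((2 * m + 5) - (t + u)) ((t + u + 2))
  | UR t, BB => (t + 1)
  | UR t, S1 => (m + 2) - (t)
  | UR t, S2 => (m + 1) - (t)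
  | UR t, T1 => (m + 4) - (t)
  | UR t, T2 => (m + 4) - (t)
  | UR t, W0 => (m + 3) - (t)
  | UR t, W1 => (m + 4) - (t)
  | UR t, W2 => (m + 3) - (t)
  | UR t, W3 => (m + 4) - (t)
  | UR t, W4 => (m + 2) - (t)
  | UR t, W5 => (m + 3) - (t)
  | UR t, W6 => (m + 2) - (t)
  | UR t, W7 => (m + 3) - (t)
  | VM, UM => (2)
  | VM, UL u => (u + 2)
  | VM, UR u => (u + 2)
  | VM, VM => (0)
  | VM, VL u => (u)
  | VM, VR u => (u)
  | VM, BB => (1)
  | VM, S1 => (m + 3)
  | VM, S2 => (m + 3)
  | VM, T1 => (m + 1)
  | VM, T2 => (m + 1)
  | VM, W0 => (m + 3)
  | VM, W1 => (m + 2)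
  | VM, W2 => (m + 3)
  | VM, W3 => (m + 2)
  | VM, W4 => (m + 3)
  | VM, W5 => (m + 2)
  | VM, W6 => (m + 3)
  | VM, W7 => (m + 2)
  | VL t, UM => (t + 2)
  | VL t, UL u => minn ((2 * m + 5) - (t + u)) ((t + u + 2))
  | VL t, UR u => minn ((2 * m + 5) - (t + u)) ((t + u + 2))
  | VL t, VM => (t)
  | VL t, VL u => (t - u) + (u - t)
  | VL t, VR u => minn ((t + u)) ((2 * m + 1) - (t + u))
  | VL t, BB => (t + 1)
  | VL t, S1 => (m + 4) - (t)
  | VL t, S2 => (m + 4) - (t)
  | VL t, T1 => (m + 1) - (t)
  | VL t, T2 => (m + 2) - (t)
  | VL t, W0 => (m + 3) - (t)
  | VL t, W1 => (m + 2) - (t)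
  | VL t, W2 => (m + 4) - (t)
  | VL t, W3 => (m + 3) - (t)
  | VL t, W4 => (m + 3) - (t)
  | VL t, W5 => (m + 2) - (t)
  | VL t, W6 => (m + 4) - (t)
  | VL t, W7 => (m + 3) - (t)
  | VR t, UM => (t + 2)
  | VR t, UL u => minn ((2 * m + 5) - (t + u)) ((t + u + 2))
  | VR t, UR u => minn ((2 * m + 5) - (t + u)) ((t + u + 2))
  | VR t, VM => (t)
  | VR t, VL u => minn ((t + u)) ((2 * m + 1) - (t + u))
  | VR t, VR u => (t - u) + (u - t)
  | VR t, BB => (t + 1)
  | VR t, S1 => (m + 4) - (t)
  | VR t, S2 => (m + 4) - (t)
  | VR t, T1 => (m + 2) - (t)
  | VR t, T2 => (m + 1) - (t)
  | VR t, W0 => (m + 4) - (t)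
  | VR t, W1 => (m + 3) - (t)
  | VR t, W2 => (m + 3) - (t)
  | VR t, W3 => (m + 2) - (t)
  | VR t, W4 => (m + 4) - (t)
  | VR t, W5 => (m + 3) - (t)
  | VR t, W6 => (m + 3) - (t)
  | VR t, W7 => (m + 2) - (t)
  | BB, UM => (1)
  | BB, UL u => (u + 1)
  | BB, UR u => (u + 1)
  | BB, VM => (1)
  | BB, VL u => (u + 1)
  | BB, VR u => (u + 1)
  | BB, BB => (0)
  | BB, S1 => (m + 2)
  | BB, S2 => (m + 2)
  | BB, T1 => (m + 2)
  | BB, T2 => (m + 2)
  | BB, W0 => (m + 3)
  | BB, W1 => (m + 3)
  | BB, W2 => (m + 3)
  | BB, W3 => (m + 3)
  | BB, W4 => (m + 3)
  | BB, W5 => (m + 3)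
  | BB, W6 => (m + 3)
  | BB, W7 => (m + 3)
  | S1, UM => (m + 1)
  | S1, UL u => (m + 1) - (u)
  | S1, UR u => (m + 2) - (u)
  | S1, VM => (m + 3)
  | S1, VL u => (m + 4) - (u)
  | S1, VR u => (m + 4) - (u)
  | S1, BB => (m + 2)
  | S1, S1 => (0)
  | S1, S2 => (3)
  | S1, T1 => (3)
  | S1, T2 => (3)
  | S1, W0 => (1)
  | S1, W1 => (2)
  | S1, W2 => (1)
  | S1, W3 => (2)
  | S1, W4 => (4)
  | S1, W5 => (4)
  | S1, W6 => (4)
  | S1, W7 => (4)
  | S2, UM => (m + 1)
  | S2, UL u => (m + 2) - (u)
  | S2, UR u => (m + 1) - (u)
  | S2, VM => (m + 3)
  | S2, VL u => (m + 4) - (u)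
  | S2, VR u => (m + 4) - (u)
  | S2, BB => (m + 2)
  | S2, S1 => (3)
  | S2, S2 => (0)
  | S2, T1 => (3)
  | S2, T2 => (3)
  | S2, W0 => (4)
  | S2, W1 => (4)
  | S2, W2 => (4)
  | S2, W3 => (4)
  | S2, W4 => (1)
  | S2, W5 => (2)
  | S2, W6 => (1)
  | S2, W7 => (2)
  | T1, UM => (m + 3)
  | T1, UL u => (m + 4) - (u)
  | T1, UR u => (m + 4) - (u)
  | T1, VM => (m + 1)
  | T1, VL u => (m + 1) - (u)
  | T1, VR u => (m + 2) - (u)
  | T1, BB => (m + 2)
  | T1, S1 => (3)
  | T1, S2 => (3)
  | T1, T1 => (0)
  | T1, T2 => (3)
  | T1, W0 => (2)
  | T1, W1 => (1)
  | T1, W2 => (4)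
  | T1, W3 => (4)
  | T1, W4 => (2)
  | T1, W5 => (1)
  | T1, W6 => (4)
  | T1, W7 => (4)
  | T2, UM => (m + 3)
  | T2, UL u => (m + 4) - (u)
  | T2, UR u => (m + 4) - (u)
  | T2, VM => (m + 1)
  | T2, VL u => (m + 2) - (u)
  | T2, VR u => (m + 1) - (u)
  | T2, BB => (m + 2)
  | T2, S1 => (3)
  | T2, S2 => (3)
  | T2, T1 => (3)
  | T2, T2 => (0)
  | T2, W0 => (4)
  | T2, W1 => (4)
  | T2, W2 => (2)
  | T2, W3 => (1)
  | T2, W4 => (4)
  | T2, W5 => (4)
  | T2, W6 => (2)
  | T2, W7 => (1)
  | W0, UM => (m + 2)
  | W0, UL u => (m + 2) - (u)
  | W0, UR u => (m + 3) - (u)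
  | W0, VM => (m + 3)
  | W0, VL u => (m + 3) - (u)
  | W0, VR u => (m + 4) - (u)
  | W0, BB => (m + 3)
  | W0, S1 => (1)
  | W0, S2 => (4)
  | W0, T1 => (2)
  | W0, T2 => (4)
  | W0, W0 => (0)
  | W0, W1 => (1)
  | W0, W2 => (2)
  | W0, W3 => (3)
  | W0, W4 => (4)
  | W0, W5 => (3)
  | W0, W6 => (5)
  | W0, W7 => (5)
  | W1, UM => (m + 3)
  | W1, UL u => (m + 3) - (u)
  | W1, UR u => (m + 4) - (u)
  | W1, VM => (m + 2)
  | W1, VL u => (m + 2) - (u)
  | W1, VR u => (m + 3) - (u)
  | W1, BB => (m + 3)
  | W1, S1 => (2)
  | W1, S2 => (4)
  | W1, T1 => (1)
  | W1, T2 => (4)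
  | W1, W0 => (1)
  | W1, W1 => (0)
  | W1, W2 => (3)
  | W1, W3 => (4)
  | W1, W4 => (3)
  | W1, W5 => (2)
  | W1, W6 => (5)
  | W1, W7 => (5)
  | W2, UM => (m + 2)
  | W2, UL u => (m + 2) - (u)
  | W2, UR u => (m + 3) - (u)
  | W2, VM => (m + 3)
  | W2, VL u => (m + 4) - (u)
  | W2, VR u => (m + 3) - (u)
  | W2, BB => (m + 3)
  | W2, S1 => (1)
  | W2, S2 => (4)
  | W2, T1 => (4)
  | W2, T2 => (2)
  | W2, W0 => (2)
  | W2, W1 => (3)
  | W2, W2 => (0)
  | W2, W3 => (1)
  | W2, W4 => (5)
  | W2, W5 => (5)
  | W2, W6 => (4)
  | W2, W7 => (3)
  | W3, UM => (m + 3)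
  | W3, UL u => (m + 3) - (u)
  | W3, UR u => (m + 4) - (u)
  | W3, VM => (m + 2)
  | W3, VL u => (m + 3) - (u)
  | W3, VR u => (m + 2) - (u)
  | W3, BB => (m + 3)
  | W3, S1 => (2)
  | W3, S2 => (4)
  | W3, T1 => (4)
  | W3, T2 => (1)
  | W3, W0 => (3)
  | W3, W1 => (4)
  | W3, W2 => (1)
  | W3, W3 => (0)
  | W3, W4 => (5)
  | W3, W5 => (5)
  | W3, W6 => (3)
  | W3, W7 => (2)
  | W4, UM => (m + 2)
  | W4, UL u => (m + 3) - (u)
  | W4, UR u => (m + 2) - (u)
  | W4, VM => (m + 3)
  | W4, VL u => (m + 3) - (u)
  | W4, VR u => (m + 4) - (u)
  | W4, BB => (m + 3)
  | W4, S1 => (4)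
  | W4, S2 => (1)
  | W4, T1 => (2)
  | W4, T2 => (4)
  | W4, W0 => (4)
  | W4, W1 => (3)
  | W4, W2 => (5)
  | W4, W3 => (5)
  | W4, W4 => (0)
  | W4, W5 => (1)
  | W4, W6 => (2)
  | W4, W7 => (3)
  | W5, UM => (m + 3)
  | W5, UL u => (m + 4) - (u)
  | W5, UR u => (m + 3) - (u)
  | W5, VM => (m + 2)
  | W5, VL u => (m + 2) - (u)
  | W5, VR u => (m + 3) - (u)
  | W5, BB => (m + 3)
  | W5, S1 => (4)
  | W5, S2 => (2)
  | W5, T1 => (1)
  | W5, T2 => (4)
  | W5, W0 => (3)
  | W5, W1 => (2)
  | W5, W2 => (5)
  | W5, W3 => (5)
  | W5, W4 => (1)
  | W5, W5 => (0)
  | W5, W6 => (3)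
  | W5, W7 => (4)
  | W6, UM => (m + 2)
  | W6, UL u => (m + 3) - (u)
  | W6, UR u => (m + 2) - (u)
  | W6, VM => (m + 3)
  | W6, VL u => (m + 4) - (u)
  | W6, VR u => (m + 3) - (u)
  | W6, BB => (m + 3)
  | W6, S1 => (4)
  | W6, S2 => (1)
  | W6, T1 => (4)
  | W6, T2 => (2)
  | W6, W0 => (5)
  | W6, W1 => (5)
  | W6, W2 => (4)
  | W6, W3 => (3)
  | W6, W4 => (2)
  | W6, W5 => (3)
  | W6, W6 => (0)
  | W6, W7 => (1)
  | W7, UM => (m + 3)
  | W7, UL u => (m + 4) - (u)
  | W7, UR u => (m + 3) - (u)
  | W7, VM => (m + 2)
  | W7, VL u => (m + 3) - (u)
  | W7, VR u => (m + 2) - (u)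
  | W7, BB => (m + 3)
  | W7, S1 => (4)
  | W7, S2 => (2)
  | W7, T1 => (4)
  | W7, T2 => (1)
  | W7, W0 => (5)
  | W7, W1 => (5)
  | W7, W2 => (3)
  | W7, W3 => (2)
  | W7, W4 => (3)
  | W7, W5 => (4)
  | W7, W6 => (1)
  | W7, W7 => (0)
  end.
Definition eqV (x y : V) : Prop :=
  match x, y with
  | UM, UM => True
  | UL t, UL u => t = u
  | UR t, UR u => t = u
  | VM, VM => True
  | VL t, VL u => t = u
  | VR t, VR u => t = u
  | BB, BB => True
  | S1, S1 => True
  | S2, S2 => True
  | T1, T1 => True
  | T2, T2 => True
  | W0, W0 => True
  | W1, W1 => True
  | W2, W2 => True
  | W3, W3 => True
  | W4, W4 => True
  | W5, W5 => True
  | W6, W6 => True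
  | W7, W7 => True
  | _, _ => False
  end.
Definition DZ (m : nat) (x y : V) : Z :=
  match x, y with
  | UM, UM => (0)
  | UM, UL u => (1 * Z.of_nat u)
  | UM, UR u => (1 * Z.of_nat u)
  | UM, VM => (2)
  | UM, VL u => (1 * Z.of_nat u + 2)
  | UM, VR u => (1 * Z.of_nat u + 2)
  | UM, BB => (1)
  | UM, S1 => (1 * Z.of_nat m + 1)
  | UM, S2 => (1 * Z.of_nat m + 1)
  | UM, T1 => (1 * Z.of_nat m + 3)
  | UM, T2 => (1 * Z.of_nat m + 3)
  | UM, W0 => (1 * Z.of_nat m + 2)
  | UM, W1 => (1 * Z.of_nat m + 3)
  | UM, W2 => (1 * Z.of_nat m + 2)
  | UM, W3 => (1 * Z.of_nat m + 3)
  | UM, W4 => (1 * Z.of_nat m + 2)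
  | UM, W5 => (1 * Z.of_nat m + 3)
  | UM, W6 => (1 * Z.of_nat m + 2)
  | UM, W7 => (1 * Z.of_nat m + 3)
  | UL t, UM => (1 * Z.of_nat t)
  | UL t, UL u => Z.abs (Z.of_nat t - Z.of_nat u)
  | UL t, UR u => Z.min (1 * Z.of_nat t + 1 * Z.of_nat u) (2 * Z.of_nat m + -1 * Z.of_nat t + -1 * Z.of_nat u + 1)
  | UL t, VM => (1 * Z.of_nat t + 2)
  | UL t, VL u => Z.min (2 * Z.of_nat m + -1 * Z.of_nat t + -1 * Z.of_nat u + 5) (1 * Z.of_nat t + 1 * Z.of_nat u + 2)
  | UL t, VR u => Z.min (2 * Z.of_nat m + -1 * Z.of_nat t + -1 * Z.of_nat u + 5) (1 * Z.of_nat t + 1 * Z.of_nat u + 2)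
  | UL t, BB => (1 * Z.of_nat t + 1)
  | UL t, S1 => (1 * Z.of_nat m + -1 * Z.of_nat t + 1)
  | UL t, S2 => (1 * Z.of_nat m + -1 * Z.of_nat t + 2)
  | UL t, T1 => (1 * Z.of_nat m + -1 * Z.of_nat t + 4)
  | UL t, T2 => (1 * Z.of_nat m + -1 * Z.of_nat t + 4)
  | UL t, W0 => (1 * Z.of_nat m + -1 * Z.of_nat t + 2)
  | UL t, W1 => (1 * Z.of_nat m + -1 * Z.of_nat t + 3)
  | UL t, W2 => (1 * Z.of_nat m + -1 * Z.of_nat t + 2)
  | UL t, W3 => (1 * Z.of_nat m + -1 * Z.of_nat t + 3)
  | UL t, W4 => (1 * Z.of_nat m + -1 * Z.of_nat t + 3)
  | UL t, W5 => (1 * Z.of_nat m + -1 * Z.of_nat t + 4)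
  | UL t, W6 => (1 * Z.of_nat m + -1 * Z.of_nat t + 3)
  | UL t, W7 => (1 * Z.of_nat m + -1 * Z.of_nat t + 4)
  | UR t, UM => (1 * Z.of_nat t)
  | UR t, UL u => Z.min (1 * Z.of_nat t + 1 * Z.of_nat u) (2 * Z.of_nat m + -1 * Z.of_nat t + -1 * Z.of_nat u + 1)
  | UR t, UR u => Z.abs (Z.of_nat t - Z.of_nat u)
  | UR t, VM => (1 * Z.of_nat t + 2)
  | UR t, VL u => Z.min (2 * Z.of_nat m + -1 * Z.of_nat t + -1 * Z.of_nat u + 5) (1 * Z.of_nat t + 1 * Z.of_nat u + 2)
  | UR t, VR u => Z.min (2 * Z.of_nat m + -1 * Z.of_nat t + -1 * Z.of_nat u + 5) (1 * Z.of_nat t + 1 * Z.of_nat u + 2)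
  | UR t, BB => (1 * Z.of_nat t + 1)
  | UR t, S1 => (1 * Z.of_nat m + -1 * Z.of_nat t + 2)
  | UR t, S2 => (1 * Z.of_nat m + -1 * Z.of_nat t + 1)
  | UR t, T1 => (1 * Z.of_nat m + -1 * Z.of_nat t + 4)
  | UR t, T2 => (1 * Z.of_nat m + -1 * Z.of_nat t + 4)
  | UR t, W0 => (1 * Z.of_nat m + -1 * Z.of_nat t + 3)
  | UR t, W1 => (1 * Z.of_nat m + -1 * Z.of_nat t + 4)
  | UR t, W2 => (1 * Z.of_nat m + -1 * Z.of_nat t + 3)
  | UR t, W3 => (1 * Z.of_nat m + -1 * Z.of_nat t + 4)
  | UR t, W4 => (1 * Z.of_nat m + -1 * Z.of_nat t + 2)
  | UR t, W5 => (1 * Z.of_nat m + -1 * Z.of_nat t + 3)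
  | UR t, W6 => (1 * Z.of_nat m + -1 * Z.of_nat t + 2)
  | UR t, W7 => (1 * Z.of_nat m + -1 * Z.of_nat t + 3)
  | VM, UM => (2)
  | VM, UL u => (1 * Z.of_nat u + 2)
  | VM, UR u => (1 * Z.of_nat u + 2)
  | VM, VM => (0)
  | VM, VL u => (1 * Z.of_nat u)
  | VM, VR u => (1 * Z.of_nat u)
  | VM, BB => (1)
  | VM, S1 => (1 * Z.of_nat m + 3)
  | VM, S2 => (1 * Z.of_nat m + 3)
  | VM, T1 => (1 * Z.of_nat m + 1)
  | VM, T2 => (1 * Z.of_nat m + 1)
  | VM, W0 => (1 * Z.of_nat m + 3)
  | VM, W1 => (1 * Z.of_nat m + 2)
  | VM, W2 => (1 * Z.of_nat m + 3)
  | VM, W3 => (1 * Z.of_nat m + 2)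
  | VM, W4 => (1 * Z.of_nat m + 3)
  | VM, W5 => (1 * Z.of_nat m + 2)
  | VM, W6 => (1 * Z.of_nat m + 3)
  | VM, W7 => (1 * Z.of_nat m + 2)
  | VL t, UM => (1 * Z.of_nat t + 2)
  | VL t, UL u => Z.min (2 * Z.of_nat m + -1 * Z.of_nat t + -1 * Z.of_nat u + 5) (1 * Z.of_nat t + 1 * Z.of_nat u + 2)
  | VL t, UR u => Z.min (2 * Z.of_nat m + -1 * Z.of_nat t + -1 * Z.of_nat u + 5) (1 * Z.of_nat t + 1 * Z.of_nat u + 2)
  | VL t, VM => (1 * Z.of_nat t)
  | VL t, VL u => Z.abs (Z.of_nat t - Z.of_nat u)
  | VL t, VR u => Z.min (1 * Z.of_nat t + 1 * Z.of_nat u) (2 * Z.of_nat m + -1 * Z.of_nat t + -1 * Z.of_nat u + 1)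
  | VL t, BB => (1 * Z.of_nat t + 1)
  | VL t, S1 => (1 * Z.of_nat m + -1 * Z.of_nat t + 4)
  | VL t, S2 => (1 * Z.of_nat m + -1 * Z.of_nat t + 4)
  | VL t, T1 => (1 * Z.of_nat m + -1 * Z.of_nat t + 1)
  | VL t, T2 => (1 * Z.of_nat m + -1 * Z.of_nat t + 2)
  | VL t, W0 => (1 * Z.of_nat m + -1 * Z.of_nat t + 3)
  | VL t, W1 => (1 * Z.of_nat m + -1 * Z.of_nat t + 2)
  | VL t, W2 => (1 * Z.of_nat m + -1 * Z.of_nat t + 4)
  | VL t, W3 => (1 * Z.of_nat m + -1 * Z.of_nat t + 3)
  | VL t, W4 => (1 * Z.of_nat m + -1 * Z.of_nat t + 3)
  | VL t, W5 => (1 * Z.of_nat m + -1 * Z.of_nat t + 2)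
  | VL t, W6 => (1 * Z.of_nat m + -1 * Z.of_nat t + 4)
  | VL t, W7 => (1 * Z.of_nat m + -1 * Z.of_nat t + 3)
  | VR t, UM => (1 * Z.of_nat t + 2)
  | VR t, UL u => Z.min (2 * Z.of_nat m + -1 * Z.of_nat t + -1 * Z.of_nat u + 5) (1 * Z.of_nat t + 1 * Z.of_nat u + 2)
  | VR t, UR u => Z.min (2 * Z.of_nat m + -1 * Z.of_nat t + -1 * Z.of_nat u + 5) (1 * Z.of_nat t + 1 * Z.of_nat u + 2)
  | VR t, VM => (1 * Z.of_nat t)
  | VR t, VL u => Z.min (1 * Z.of_nat t + 1 * Z.of_nat u) (2 * Z.of_nat m + -1 * Z.of_nat t + -1 * Z.of_nat u + 1)
  | VR t, VR u => Z.abs (Z.of_nat t - Z.of_nat u)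
  | VR t, BB => (1 * Z.of_nat t + 1)
  | VR t, S1 => (1 * Z.of_nat m + -1 * Z.of_nat t + 4)
  | VR t, S2 => (1 * Z.of_nat m + -1 * Z.of_nat t + 4)
  | VR t, T1 => (1 * Z.of_nat m + -1 * Z.of_nat t + 2)
  | VR t, T2 => (1 * Z.of_nat m + -1 * Z.of_nat t + 1)
  | VR t, W0 => (1 * Z.of_nat m + -1 * Z.of_nat t + 4)
  | VR t, W1 => (1 * Z.of_nat m + -1 * Z.of_nat t + 3)
  | VR t, W2 => (1 * Z.of_nat m + -1 * Z.of_nat t + 3)
  | VR t, W3 => (1 * Z.of_nat m + -1 * Z.of_nat t + 2)
  | VR t, W4 => (1 * Z.of_nat m + -1 * Z.of_nat t + 4)
  | VR t, W5 => (1 * Z.of_nat m + -1 * Z.of_nat t + 3)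
  | VR t, W6 => (1 * Z.of_nat m + -1 * Z.of_nat t + 3)
  | VR t, W7 => (1 * Z.of_nat m + -1 * Z.of_nat t + 2)
  | BB, UM => (1)
  | BB, UL u => (1 * Z.of_nat u + 1)
  | BB, UR u => (1 * Z.of_nat u + 1)
  | BB, VM => (1)
  | BB, VL u => (1 * Z.of_nat u + 1)
  | BB, VR u => (1 * Z.of_nat u + 1)
  | BB, BB => (0)
  | BB, S1 => (1 * Z.of_nat m + 2)
  | BB, S2 => (1 * Z.of_nat m + 2)
  | BB, T1 => (1 * Z.of_nat m + 2)
  | BB, T2 => (1 * Z.of_nat m + 2)
  | BB, W0 => (1 * Z.of_nat m + 3)
  | BB, W1 => (1 * Z.of_nat m + 3)
  | BB, W2 => (1 * Z.of_nat m + 3)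
  | BB, W3 => (1 * Z.of_nat m + 3)
  | BB, W4 => (1 * Z.of_nat m + 3)
  | BB, W5 => (1 * Z.of_nat m + 3)
  | BB, W6 => (1 * Z.of_nat m + 3)
  | BB, W7 => (1 * Z.of_nat m + 3)
  | S1, UM => (1 * Z.of_nat m + 1)
  | S1, UL u => (1 * Z.of_nat m + -1 * Z.of_nat u + 1)
  | S1, UR u => (1 * Z.of_nat m + -1 * Z.of_nat u + 2)
  | S1, VM => (1 * Z.of_nat m + 3)
  | S1, VL u => (1 * Z.of_nat m + -1 * Z.of_nat u + 4)
  | S1, VR u => (1 * Z.of_nat m + -1 * Z.of_nat u + 4)
  | S1, BB => (1 * Z.of_nat m + 2)
  | S1, S1 => (0)
  | S1, S2 => (3)
  | S1, T1 => (3)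
  | S1, T2 => (3)
  | S1, W0 => (1)
  | S1, W1 => (2)
  | S1, W2 => (1)
  | S1, W3 => (2)
  | S1, W4 => (4)
  | S1, W5 => (4)
  | S1, W6 => (4)
  | S1, W7 => (4)
  | S2, UM => (1 * Z.of_nat m + 1)
  | S2, UL u => (1 * Z.of_nat m + -1 * Z.of_nat u + 2)
  | S2, UR u => (1 * Z.of_nat m + -1 * Z.of_nat u + 1)
  | S2, VM => (1 * Z.of_nat m + 3)
  | S2, VL u => (1 * Z.of_nat m + -1 * Z.of_nat u + 4)
  | S2, VR u => (1 * Z.of_nat m + -1 * Z.of_nat u + 4)
  | S2, BB => (1 * Z.of_nat m + 2)
  | S2, S1 => (3)
  | S2, S2 => (0)
  | S2, T1 => (3)
  | S2, T2 => (3)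
  | S2, W0 => (4)
  | S2, W1 => (4)
  | S2, W2 => (4)
  | S2, W3 => (4)
  | S2, W4 => (1)
  | S2, W5 => (2)
  | S2, W6 => (1)
  | S2, W7 => (2)
  | T1, UM => (1 * Z.of_nat m + 3)
  | T1, UL u => (1 * Z.of_nat m + -1 * Z.of_nat u + 4)
  | T1, UR u => (1 * Z.of_nat m + -1 * Z.of_nat u + 4)
  | T1, VM => (1 * Z.of_nat m + 1)
  | T1, VL u => (1 * Z.of_nat m + -1 * Z.of_nat u + 1)
  | T1, VR u => (1 * Z.of_nat m + -1 * Z.of_nat u + 2)
  | T1, BB => (1 * Z.of_nat m + 2)
  | T1, S1 => (3)
  | T1, S2 => (3)
  | T1, T1 => (0)
  | T1, T2 => (3)
  | T1, W0 => (2)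
  | T1, W1 => (1)
  | T1, W2 => (4)
  | T1, W3 => (4)
  | T1, W4 => (2)
  | T1, W5 => (1)
  | T1, W6 => (4)
  | T1, W7 => (4)
  | T2, UM => (1 * Z.of_nat m + 3)
  | T2, UL u => (1 * Z.of_nat m + -1 * Z.of_nat u + 4)
  | T2, UR u => (1 * Z.of_nat m + -1 * Z.of_nat u + 4)
  | T2, VM => (1 * Z.of_nat m + 1)
  | T2, VL u => (1 * Z.of_nat m + -1 * Z.of_nat u + 2)
  | T2, VR u => (1 * Z.of_nat m + -1 * Z.of_nat u + 1)
  | T2, BB => (1 * Z.of_nat m + 2)
  | T2, S1 => (3)
  | T2, S2 => (3)
  | T2, T1 => (3)
  | T2, T2 => (0)
  | T2, W0 => (4)
  | T2, W1 => (4)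
  | T2, W2 => (2)
  | T2, W3 => (1)
  | T2, W4 => (4)
  | T2, W5 => (4)
  | T2, W6 => (2)
  | T2, W7 => (1)
  | W0, UM => (1 * Z.of_nat m + 2)
  | W0, UL u => (1 * Z.of_nat m + -1 * Z.of_nat u + 2)
  | W0, UR u => (1 * Z.of_nat m + -1 * Z.of_nat u + 3)
  | W0, VM => (1 * Z.of_nat m + 3)
  | W0, VL u => (1 * Z.of_nat m + -1 * Z.of_nat u + 3)
  | W0, VR u => (1 * Z.of_nat m + -1 * Z.of_nat u + 4)
  | W0, BB => (1 * Z.of_nat m + 3)
  | W0, S1 => (1)
  | W0, S2 => (4)
  | W0, T1 => (2)
  | W0, T2 => (4)
  | W0, W0 => (0)
  | W0, W1 => (1)
  | W0, W2 => (2)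
  | W0, W3 => (3)
  | W0, W4 => (4)
  | W0, W5 => (3)
  | W0, W6 => (5)
  | W0, W7 => (5)
  | W1, UM => (1 * Z.of_nat m + 3)
  | W1, UL u => (1 * Z.of_nat m + -1 * Z.of_nat u + 3)
  | W1, UR u => (1 * Z.of_nat m + -1 * Z.of_nat u + 4)
  | W1, VM => (1 * Z.of_nat m + 2)
  | W1, VL u => (1 * Z.of_nat m + -1 * Z.of_nat u + 2)
  | W1, VR u => (1 * Z.of_nat m + -1 * Z.of_nat u + 3)
  | W1, BB => (1 * Z.of_nat m + 3)
  | W1, S1 => (2)
  | W1, S2 => (4)
  | W1, T1 => (1)
  | W1, T2 => (4)
  | W1, W0 => (1)
  | W1, W1 => (0)
  | W1, W2 => (3)
  | W1, W3 => (4)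
  | W1, W4 => (3)
  | W1, W5 => (2)
  | W1, W6 => (5)
  | W1, W7 => (5)
  | W2, UM => (1 * Z.of_nat m + 2)
  | W2, UL u => (1 * Z.of_nat m + -1 * Z.of_nat u + 2)
  | W2, UR u => (1 * Z.of_nat m + -1 * Z.of_nat u + 3)
  | W2, VM => (1 * Z.of_nat m + 3)
  | W2, VL u => (1 * Z.of_nat m + -1 * Z.of_nat u + 4)
  | W2, VR u => (1 * Z.of_nat m + -1 * Z.of_nat u + 3)
  | W2, BB => (1 * Z.of_nat m + 3)
  | W2, S1 => (1)
  | W2, S2 => (4)
  | W2, T1 => (4)
  | W2, T2 => (2)
  | W2, W0 => (2)
  | W2, W1 => (3)
  | W2, W2 => (0)
  | W2, W3 => (1)
  | W2, W4 => (5)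
  | W2, W5 => (5)
  | W2, W6 => (4)
  | W2, W7 => (3)
  | W3, UM => (1 * Z.of_nat m + 3)
  | W3, UL u => (1 * Z.of_nat m + -1 * Z.of_nat u + 3)
  | W3, UR u => (1 * Z.of_nat m + -1 * Z.of_nat u + 4)
  | W3, VM => (1 * Z.of_nat m + 2)
  | W3, VL u => (1 * Z.of_nat m + -1 * Z.of_nat u + 3)
  | W3, VR u => (1 * Z.of_nat m + -1 * Z.of_nat u + 2)
  | W3, BB => (1 * Z.of_nat m + 3)
  | W3, S1 => (2)
  | W3, S2 => (4)
  | W3, T1 => (4)
  | W3, T2 => (1)
  | W3, W0 => (3)
  | W3, W1 => (4)
  | W3, W2 => (1)
  | W3, W3 => (0)
  | W3, W4 => (5)
  | W3, W5 => (5)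
  | W3, W6 => (3)
  | W3, W7 => (2)
  | W4, UM => (1 * Z.of_nat m + 2)
  | W4, UL u => (1 * Z.of_nat m + -1 * Z.of_nat u + 3)
  | W4, UR u => (1 * Z.of_nat m + -1 * Z.of_nat u + 2)
  | W4, VM => (1 * Z.of_nat m + 3)
  | W4, VL u => (1 * Z.of_nat m + -1 * Z.of_nat u + 3)
  | W4, VR u => (1 * Z.of_nat m + -1 * Z.of_nat u + 4)
  | W4, BB => (1 * Z.of_nat m + 3)
  | W4, S1 => (4)
  | W4, S2 => (1)
  | W4, T1 => (2)
  | W4, T2 => (4)
  | W4, W0 => (4)
  | W4, W1 => (3)
  | W4, W2 => (5)
  | W4, W3 => (5)
  | W4, W4 => (0)
  | W4, W5 => (1)
  | W4, W6 => (2)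
  | W4, W7 => (3)
  | W5, UM => (1 * Z.of_nat m + 3)
  | W5, UL u => (1 * Z.of_nat m + -1 * Z.of_nat u + 4)
  | W5, UR u => (1 * Z.of_nat m + -1 * Z.of_nat u + 3)
  | W5, VM => (1 * Z.of_nat m + 2)
  | W5, VL u => (1 * Z.of_nat m + -1 * Z.of_nat u + 2)
  | W5, VR u => (1 * Z.of_nat m + -1 * Z.of_nat u + 3)
  | W5, BB => (1 * Z.of_nat m + 3)
  | W5, S1 => (4)
  | W5, S2 => (2)
  | W5, T1 => (1)
  | W5, T2 => (4)
  | W5, W0 => (3)
  | W5, W1 => (2)
  | W5, W2 => (5)
  | W5, W3 => (5)
  | W5, W4 => (1)
  | W5, W5 => (0)
  | W5, W6 => (3)
  | W5, W7 => (4)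
  | W6, UM => (1 * Z.of_nat m + 2)
  | W6, UL u => (1 * Z.of_nat m + -1 * Z.of_nat u + 3)
  | W6, UR u => (1 * Z.of_nat m + -1 * Z.of_nat u + 2)
  | W6, VM => (1 * Z.of_nat m + 3)
  | W6, VL u => (1 * Z.of_nat m + -1 * Z.of_nat u + 4)
  | W6, VR u => (1 * Z.of_nat m + -1 * Z.of_nat u + 3)
  | W6, BB => (1 * Z.of_nat m + 3)
  | W6, S1 => (4)
  | W6, S2 => (1)
  | W6, T1 => (4)
  | W6, T2 => (2)
  | W6, W0 => (5)
  | W6, W1 => (5)
  | W6, W2 => (4)
  | W6, W3 => (3)
  | W6, W4 => (2)
  | W6, W5 => (3)
  | W6, W6 => (0)
  | W6, W7 => (1)
  | W7, UM => (1 * Z.of_nat m + 3)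
  | W7, UL u => (1 * Z.of_nat m + -1 * Z.of_nat u + 4)
  | W7, UR u => (1 * Z.of_nat m + -1 * Z.of_nat u + 3)
  | W7, VM => (1 * Z.of_nat m + 2)
  | W7, VL u => (1 * Z.of_nat m + -1 * Z.of_nat u + 3)
  | W7, VR u => (1 * Z.of_nat m + -1 * Z.of_nat u + 2)
  | W7, BB => (1 * Z.of_nat m + 3)
  | W7, S1 => (4)
  | W7, S2 => (2)
  | W7, T1 => (4)
  | W7, T2 => (1)
  | W7, W0 => (5)
  | W7, W1 => (5)
  | W7, W2 => (3)
  | W7, W3 => (2)
  | W7, W4 => (3)
  | W7, W5 => (4)
  | W7, W6 => (1)
  | W7, W7 => (0)
  end.

Definition valid (m : nat) (x : V) : bool :=
  match x with
  | UL t | UR t | VL t | VR t => (0 < t) && (t <= m)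
  | _ => true
  end.

Definition enc (m : nat) (x : V) : nat :=
  match x with
  | UL t => m - t | UM => m | UR t => m + t
  | VL t => 3 * m + 1 - t | VM => 3 * m + 1 | VR t => 3 * m + 1 + t
  | BB => 4 * m + 2 | S1 => 4 * m + 3 | S2 => 4 * m + 4 | T1 => 4 * m + 5
  | T2 => 4 * m + 6 | W0 => 4 * m + 7 | W1 => 4 * m + 8 | W2 => 4 * m + 9
  | W3 => 4 * m + 10 | W4 => 4 * m + 11 | W5 => 4 * m + 12 | W6 => 4 * m + 13
  | W7 => 4 * m + 14
  end.

Definition dec (m n : nat) : V :=
  if n < m then UL (m - n) else if n == m then UM else if n < 2 * m + 1 then UR (n - m)
  else if n < 3 * m + 1 then VL (3 * m + 1 - n) else if n == 3 * m + 1 then VM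
  else if n < 4 * m + 2 then VR (n - (3 * m + 1))
  else if n == 4 * m + 2 then BB else if n == 4 * m + 3 then S1
  else if n == 4 * m + 4 then S2 else if n == 4 * m + 5 then T1
  else if n == 4 * m + 6 then T2 else if n == 4 * m + 7 then W0
  else if n == 4 * m + 8 then W1 else if n == 4 * m + 9 then W2
  else if n == 4 * m + 10 then W3 else if n == 4 * m + 11 then W4
  else if n == 4 * m + 12 then W5 else if n == 4 * m + 13 then W6 else W7.

Definition nb (m : nat) (z : V) : seq (bool * V) :=
  match z with
  | UM => [:: (true, UL 1); (true, UR 1); (true, BB)]
  | UL t => [:: (t == 1, UM); (1 < t, UL t.-1); (t < m, UL t.+1); (t == m, UR m); (t == m, S1)]
  | UR t => [:: (t == 1, UM); (1 < t, UR t.-1); (t < m, UR t.+1); (t == m, UL m); (t == m, S2)]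
  | VM => [:: (true, VL 1); (true, VR 1); (true, BB)]
  | VL t => [:: (t == 1, VM); (1 < t, VL t.-1); (t < m, VL t.+1); (t == m, VR m); (t == m, T1)]
  | VR t => [:: (t == 1, VM); (1 < t, VR t.-1); (t < m, VR t.+1); (t == m, VL m); (t == m, T2)]
  | BB => [:: (true, UM); (true, VM)]
  | S1 => [:: (true, UL m); (true, W0); (true, W2)]
  | S2 => [:: (true, UR m); (true, W4); (true, W6)]
  | T1 => [:: (true, VL m); (true, W1); (true, W5)]
  | T2 => [:: (true, VR m); (true, W3); (true, W7)]
  | W0 => [:: (true, S1); (true, W1)]
  | W1 => [:: (true, W0); (true, T1)]
  | W2 => [:: (true, S1); (true, W3)]
  | W3 => [:: (true, W2); (true, T2)]
  | W4 => [:: (true, S2); (true, W5)]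
  | W5 => [:: (true, W4); (true, T1)]
  | W6 => [:: (true, S2); (true, W7)]
  | W7 => [:: (true, W6); (true, T2)]
  end.

Definition E (m a c : nat) : bool :=
  [|| (a < 2 * m + 1) && ((a.+1 == 2 * m + 1) && (c == 0) || (a.+1 != 2 * m + 1) && (c == a.+1)),
      (2 * m + 1 <= a < 4 * m + 2) &&
        (((a - (2 * m + 1)).+1 == 2 * m + 1) && (c == 2 * m + 1) ||
         ((a - (2 * m + 1)).+1 != 2 * m + 1) && (c == 2 * m + 1 + (a - (2 * m + 1)).+1)),
      (a == 4 * m + 2) && (c == m),
      (a == 4 * m + 2) && (c == 3 * m + 1),
      (a == 4 * m + 3) && (c == 0),
      (a == 4 * m + 4) && (c == 2 * m),
      (a == 4 * m + 5) && (c == 2 * m + 1),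
      (a == 4 * m + 6) && (c == 4 * m + 1),
      (a == 4 * m + 3) && (c == 4 * m + 7), (a == 4 * m + 7) && (c == 4 * m + 8),
      (a == 4 * m + 8) && (c == 4 * m + 5),
      (a == 4 * m + 3) && (c == 4 * m + 9), (a == 4 * m + 9) && (c == 4 * m + 10),
      (a == 4 * m + 10) && (c == 4 * m + 6),
      (a == 4 * m + 4) && (c == 4 * m + 11), (a == 4 * m + 11) && (c == 4 * m + 12),
      (a == 4 * m + 12) && (c == 4 * m + 5),
      (a == 4 * m + 4) && (c == 4 * m + 13), (a == 4 * m + 13) && (c == 4 * m + 14)
    | (a == 4 * m + 14) && (c == 4 * m + 6)].

Definition adjV (m : nat) (y z : V) : bool := E m (enc m y) (enc m z) || E m (enc m z) (enc m y).

Fixpoint anyP (l : seq Prop) : Prop := if l is P :: l' then P \/ anyP l' else False.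
Fixpoint allP (l : seq Prop) : Prop := if l is P :: l' then P /\ allP l' else True.
Fixpoint amo (l : seq Prop) : Prop := if l is P :: l' then (P -> ~ anyP l') /\ amo l' else True.

Ltac red_all := cbn [anyP allP amo map fst snd nb DZ valid eqV adjV E enc] in *; try unfold E in *.

Lemma Vvalid_dec m n : 0 < m -> n < 4 * m + 15 -> valid m (dec m n) && (enc m (dec m n) == n).
Proof.
move=> hm hn; rewrite /dec.
repeat (case: ifP => ?; first by red_all; lia).
red_all; lia.
Qed.

Lemma Venc_lt m v : 0 < m -> valid m v -> enc m v < 4 * m + 15.
Proof. by move=> hm; case: v => *; red_all; lia. Qed.

Lemma Vdec_enc m v : 0 < m -> valid m v -> dec m (enc m v) = v.
Proof.
move=> hm; case: v => [|t|t|| t|t|||||||||||||] /= hv; rewrite /dec;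
  repeat (case: ifP => ?); first [ reflexivity | (exfalso; lia) | (f_equal; lia) ].
Qed.

Ltac amo_split := repeat match goal with
  | |- _ /\ _ => split
  | |- _ -> ~ _ => let h := fresh in let h2 := fresh in intros h h2; repeat (destruct h2 as [h2|h2]; [lia|]); exact h2
  | |- True => exact I
  end.
Ltac all_split := repeat match goal with
  | |- _ /\ _ => split
  | |- True => exact I
  | |- _ => intros; lia
  end.

Lemma V0 m x : DZ m x x = 0%Z.
Proof. case: x => *; red_all; lia. Qed.

Lemma Vpos m x y : valid m x -> valid m y -> (0 <= DZ m x y)%Z.
Proof. case: x => [|t|t|| t|t|||||||||||||]; case: y => [|u|u|| u|u|||||||||||||]; red_all; intros; lia. Qed.

Lemma VB m x z : 0 < m -> valid m x -> valid m z ->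
  allP (map (fun r : bool * V => r.1 -> (DZ m x z <= DZ m x r.2 + 1)%Z) (nb m z)).
Proof.
move=> hm; case: x => [|t|t|| t|t|||||||||||||]; case: z => [|u|u|| u|u|||||||||||||];
 red_all; intros; all_split.
Qed.

Ltac solve_or := lazymatch goal with
  | |- is_true (_ || _) => apply/orP; first [left; solve_or | right; solve_or]
  | |- _ => lia end.
Ltac all_split2 := repeat match goal with
  | |- _ /\ _ => split
  | |- True => exact I
  | |- _ -> _ => let h := fresh in intro h; apply/andP; split; [lia | solve_or]
  end.

Lemma V3 m z : 0 < m -> valid m z ->
  allP (map (fun r : bool * V => r.1 -> valid m r.2 && adjV m r.2 z) (nb m z)).
Proof.
move=> hm; case: z => [|u|u|| u|u|||||||||||||]; rewrite /adjV; red_all; intros; all_split2.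
Qed.

Ltac dhyp := repeat match goal with
  | H : is_true (_ || _) |- _ => case/orP: H => H
  | H : is_true (_ && _) |- _ => case/andP: H => ? H
  end.

Lemma V1 m z a : 0 < m -> valid m z -> E m a (enc m z) || E m (enc m z) a ->
  anyP (map (fun r : bool * V => r.1 /\ a = enc m r.2) (nb m z)).
Proof.
move=> hm; case: z => [|u|u|| u|u|||||||||||||]; red_all; intros; dhyp; first [exfalso; lia | lia].
Qed.
Lemma V2 m x z : 0 < m -> valid m x -> valid m z -> ~ eqV x z ->
  anyP (map (fun r : bool * V => r.1 /\ (DZ m x r.2 + 1 = DZ m x z)%Z) (nb m z)) /\
  amo (map (fun r : bool * V => r.1 /\ (DZ m x r.2 + 1 = DZ m x z)%Z) (nb m z)).
Proof.
move=> hm; case: x => [|t|t|| t|t|||||||||||||]; case: z => [|u|u|| u|u|||||||||||||];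
 red_all; intros; (split; [lia | amo_split]).
Qed.

Fixpoint inL (A : Type) (x : A) (l : seq A) : Prop := if l is y :: l' then y = x \/ inL x l' else False.

Lemma anyP_map (A : Type) (f : A -> Prop) l : anyP (map f l) -> exists r, inL r l /\ f r.
Proof.
elim: l => [|a l IH] //= [h|h]; first by exists a; split => //; left.
by have [r [h1 h2]] := IH h; exists r; split => //; right.
Qed.

Lemma allP_map (A : Type) (f : A -> Prop) l : allP (map f l) -> forall r, inL r l -> f r.
Proof.
elim: l => [|a l IH] //= [h1 h2] r [<-|h] //; exact: IH.
Qed.

Lemma anyP_in (A : Type) (f : A -> Prop) l r : inL r l -> f r -> anyP (map f l).
Proof.
elim: l => [|a l IH] //= [<-|h] hf; [by left | right; exact: IH].
Qed.

Lemma amo_map (A : Type) (f : A -> Prop) l r1 r2 :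
  amo (map f l) -> inL r1 l -> inL r2 l -> f r1 -> f r2 -> r1 = r2.
Proof.
elim: l => [|a l IH] //= [ha hl] [<-|h1] [<-|h2] f1 f2 //.
- by case: (ha f1); exact: (anyP_in h2).
- by case: (ha f2); exact: (anyP_in h1).
- exact: IH.
Qed.

Lemma eqV_eq x y : eqV x y -> x = y.
Proof. by case: x; case: y => //= *; subst. Qed.

Lemma modS1 k a : a < k -> (a.+1 == k -> a.+1 %% k = 0) /\ (a.+1 != k -> a.+1 %% k = a.+1).
Proof.
move=> h; split => [/eqP ->|ne]; first exact: modnn.
by apply: modn_small; rewrite ltn_neqAle ne.
Qed.

Ltac bcongr := lazymatch goal with
  | |- (_ || _) = (_ || _) => apply: congr2; [bcongr | bcongr]
  | |- _ => apply/idP/idP => ?; lia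
  end.

Lemma FdE m a c : Fdedge (2 * m + 1) a c = E m a c.
Proof.
rewrite /Fdedge /E /Fu /Fv /Fb /Fs1 /Fs2 /Ft1 /Ft2 /Fw /Fmid.
have -> : ((2 * m + 1 + 1) %/ 2).-1 = m.
  have -> : 2 * m + 1 + 1 = 2 * (m + 1) by lia.
  by rewrite mulKn // addn1.
move: (@modS1 (2 * m + 1) a) (@modS1 (2 * m + 1) (a - (2 * m + 1))).
move: (a.+1 %% (2 * m + 1)) ((a - (2 * m + 1)).+1 %% (2 * m + 1)) => X Y HX HY.
bcongr.
Qed.

Lemma gen_L1 (T : finType) (e : rel T) (d : T -> T -> nat)
  (H0 : forall x, d x x = 0)
  (HB : forall x y z, e y z -> d x z <= (d x y).+1) x p :
  path e x p -> d x (last x p) <= size p.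
Proof.
elim/last_ind: p => [|p z IH] /=; first by rewrite H0.
rewrite rcons_path last_rcons size_rcons => /andP[hp he].
by apply: leq_trans (HB x _ _ he) _; rewrite ltnS IH.
Qed.

Lemma gen_L2 (T : finType) (e : rel T) (d : T -> T -> nat)
  (H0 : forall x, d x x = 0)
  (HC : forall x z, z != x -> exists y, e y z /\ (d x y).+1 = d x z) x n :
  forall z, d x z = n -> exists p, [/\ path e x p, last x p = z & size p = n].
Proof.
elim: n => [|n IH] z hz.
  case: (eqVneq z x) => [->|nz]; first by exists [::].
  by have [y [_ h]] := HC _ _ nz; rewrite hz in h.
case: (eqVneq z x) => [zx|nz]; first by rewrite zx H0 in hz.
have [y [eyz h]] := HC _ _ nz; rewrite hz in h; case: h => h.
have [p [hp hl hs]] := IH y h.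
by exists (rcons p z); rewrite rcons_path hp hl eyz last_rcons size_rcons hs.
Qed.

Lemma gen_L3 (T : finType) (e : rel T) (d : T -> T -> nat)
  (H0 : forall x, d x x = 0)
  (HB : forall x y z, e y z -> d x z <= (d x y).+1)
  (HD : forall x y y' z, e y z -> e y' z -> (d x y).+1 = d x z -> (d x y').+1 = d x z -> y = y') x p :
  forall q, path e x p -> path e x q -> last x p = last x q ->
  size p = d x (last x p) -> size q = size p -> p = q.
Proof.
elim/last_ind: p => [|p z IH] q.
  case/lastP: q => [|q z'] //= _ _ _ _; by rewrite size_rcons.
case/lastP: q => [|q z']; first by move=> _ _ _ _; rewrite size_rcons.
rewrite !rcons_path !last_rcons !size_rcons => /andP[hp hpe] /andP[hq hqe] hz hs [hsq]; subst z'.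
have l1 := gen_L1 H0 HB hp; have l2 := gen_L1 H0 HB hq.
have b1 := HB x _ _ hpe; have b2 := HB x _ _ hqe.
have e1 : (d x (last x p)).+1 = d x z.
  apply/eqP; rewrite eqn_leq b1 andbT -hs ltnS; exact: l1.
have e2 : (d x (last x q)).+1 = d x z.
  apply/eqP; rewrite eqn_leq b2 andbT -hs ltnS -hsq; exact: l2.
have ll := HD _ _ _ _ hpe hqe e1 e2.
congr rcons; apply: IH => //.
by apply/eqP; rewrite -eqSS e1 -hs.
Qed.

Lemma gen_geodetic (T : finType) (e : rel T) (d : T -> T -> nat)
  (H0 : forall x, d x x = 0)
  (HB : forall x y z, e y z -> d x z <= (d x y).+1)
  (HC : forall x z, z != x -> exists y, e y z /\ (d x y).+1 = d x z)
  (HD : forall x y y' z, e y z -> e y' z -> (d x y).+1 = d x z -> (d x y').+1 = d x z -> y = y') :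
  geodetic e.
Proof.
move=> x y p q [/andP[hp /eqP hl] hpm] [/andP[hq /eqP hl'] hqm].
have [w [hw hwl hws]] := gen_L2 H0 HC (erefl (d x y)).
have ww : is_walk e x y w by rewrite /is_walk hw hwl eqxx.
have sp : size p = d x y.
  by apply/eqP; rewrite eqn_leq -{1}hws hpm //= -{1}hl (gen_L1 H0 HB hp).
have sq : size q = d x y.
  by apply/eqP; rewrite eqn_leq -{1}hws hqm //= -{1}hl' (gen_L1 H0 HB hq).
apply: (gen_L3 H0 HB HD hp hq); by rewrite ?hl ?hl' ?sp ?sq.
Qed.

Lemma adjE m (x y : Fk_vertex (2 * m + 1)) : 0 < m ->
  Fk_adj (2 * m + 1) x y = adjV m (dec m (val x)) (dec m (val y)).
Proof.
move=> hm; rewrite /Fk_adj /adjV !FdE.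
have hx : val x < 4 * m + 15 by have : val x < 2 * (2 * m + 1) + 13 := ltn_ord x; lia.
have hy : val y < 4 * m + 15 by have : val y < 2 * (2 * m + 1) + 13 := ltn_ord y; lia.
have /andP[_ /eqP ->] := Vvalid_dec hm hx.
by have /andP[_ /eqP ->] := Vvalid_dec hm hy.
Qed.

Lemma validD m (x : Fk_vertex (2 * m + 1)) : 0 < m -> valid m (dec m (val x)).
Proof.
move=> hm; have hx : val x < 4 * m + 15 by have : val x < 2 * (2 * m + 1) + 13 := ltn_ord x; lia.
by have /andP[-> _] := Vvalid_dec hm hx.
Qed.

Lemma encD m (x : Fk_vertex (2 * m + 1)) : 0 < m -> enc m (dec m (val x)) = val x.
Proof.
move=> hm; have hx : val x < 4 * m + 15 by have : val x < 2 * (2 * m + 1) + 13 := ltn_ord x; lia.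
by have /andP[_ /eqP ->] := Vvalid_dec hm hx.
Qed.

Lemma nbr_of m y z : 0 < m -> valid m y -> valid m z -> adjV m y z ->
  exists r, [/\ inL r (nb m z), (r.1 : bool), valid m r.2 & r.2 = y].
Proof.
move=> hm vy vz; rewrite /adjV => h.
have [r [hin [h1 h2]]] := anyP_map (V1 hm vz h).
have /andP[v2 _] := allP_map (V3 hm vz) hin h1.
exists r; split => //.
by rewrite -(Vdec_enc hm vy) h2 (Vdec_enc hm v2).
Qed.

Lemma decD_inj m (x y : Fk_vertex (2 * m + 1)) : 0 < m -> dec m (val x) = dec m (val y) -> x = y.
Proof. by move=> hm h; apply: val_inj; rewrite -(encD x hm) -(encD y hm) h. Qed.

Theorem proposition4 (k : nat) : odd k -> 3 <= k -> geodetic (Fk_adj k).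
Proof.
move=> ho hk.
have [m -> hm] : exists2 m, k = 2 * m + 1 & 0 < m.
  exists k./2; have := odd_double_half k; rewrite ho -muln2 /=; lia.
pose d := fun x y : Fk_vertex (2 * m + 1) => Z.to_nat (DZ m (dec m (val x)) (dec m (val y))).
apply: (@gen_geodetic _ _ d).
- by move=> x; rewrite /d V0.
- move=> x y z; rewrite adjE // => hyz.
  have [r [hin h1 v2 e2]] := nbr_of hm (validD y hm) (validD z hm) hyz.
  have := allP_map (VB hm (validD x hm) (validD z hm)) hin h1.
  rewrite e2 /d.
  have := Vpos (validD x hm) (validD y hm); have := Vpos (validD x hm) (validD z hm).
  lia.
- move=> x z hzx.
  have nx : ~ eqV (dec m (val x)) (dec m (val z)).
    by move/eqV_eq/(decD_inj hm) => exz; rewrite exz eqxx in hzx.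
  have [hany _] := V2 hm (validD x hm) (validD z hm) nx.
  have [r [hin [h1 h2]]] := anyP_map hany.
  have /andP[v2 a2] := allP_map (V3 hm (validD z hm)) hin h1.
  have hlt : enc m r.2 < 2 * (2 * m + 1) + 13 by have := Venc_lt hm v2; lia.
  exists (Ordinal hlt); rewrite adjE //= (Vdec_enc hm v2); split => //.
  rewrite /d; change (val (Ordinal hlt)) with (enc m r.2); rewrite (Vdec_enc hm v2).
  have := Vpos (validD x hm) v2; have := Vpos (validD x hm) (validD z hm).
  lia.
- move=> x y y' z hy hy'.
  rewrite adjE // in hy; rewrite adjE // in hy'.
  rewrite /d => e1 e2.
  have p1 := Vpos (validD x hm) (validD y hm).
  have p1' := Vpos (validD x hm) (validD y' hm).
  have p2 := Vpos (validD x hm) (validD z hm).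
  case: (eqVneq x z) => [exz | nxz].
    by subst z; move: e1; rewrite V0.
  have nx : ~ eqV (dec m (val x)) (dec m (val z)).
    by move/eqV_eq/(decD_inj hm) => exz; rewrite exz eqxx in nxz.
  have [_ hamo] := V2 hm (validD x hm) (validD z hm) nx.
  have [r [hin h1 _ er]] := nbr_of hm (validD y hm) (validD z hm) hy.
  have [r' [hin' h1' _ er']] := nbr_of hm (validD y' hm) (validD z hm) hy'.
  have err : r = r'.
    apply: (amo_map hamo hin hin'); split => //; rewrite ?er ?er'; lia.
  by apply: (decD_inj hm); rewrite -er -er' err.
Qed.
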